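(* Let $\mathcal{T}=(\mathcal{E},\mathcal{A})$ be a finite directed tree with root environment $0\in\mathcal{E}$, where $\mathcal{A}\subset\mathcal{E}^2$ is the set of arcs. Let $k\ge 1$. Suppose we are given a root weight vector $w_0\in\mathbb{R}^k$ and, for each arc $a=(e_m,e_n)\in\mathcal{A}$, a vector $\delta_a\in\mathbb{R}^k$, and define for every $e\in\mathcal{E}$ $$w_e := w_0+\sum_{a\in \mathrm{path}(0,e)}\delta_a,$$ where $\mathrm{path}(0,e)$ is the set of arcs on the directed path from $0$ to $e$ (so that $\delta_a=w_{e_n}-w_{e_m}$ for each arc $a=(e_m,e_n)$). Let $\Psi:\mathcal{X}\to\mathbb{R}^k$, where $\mathcal{X}\subseteq\mathbb{R}^d$. Assume: (i) for each environment $e\in\mathcal{E}$, pairs $(\mathbf{X},Y)$ are drawn i.i.d. from a distribution satisfying $\mathbb{E}[Y\mid \mathbf{X},e]=w_e^\top\Psi(\mathbf{X})$, and the support of $p(x\mid e)$ is the same set $\mathcal{X}$ for all $e$; (ii) there exist environments $e_1,\dots,e_k\in\mathcal{E}$ such that the matrix $[w_{e_1},\dots,w_{e_k}]$ is invertible; (iii) there exist $x^1,\dots,x^k\in\mathcal{X}$ such that the matrix $[\Psi(x^1),\dots,\Psi(x^k)]$ is invertible. Now let $\hat w_0\in\mathbb{R}^k$, $\hat\delta_a\in\mathbb{R}^k$ for $a\in\mathcal{A}$, and $\hat\Psi:\mathcal{X}\to\mathbb{R}^k$ be arbitrary, and define $\hat w_e:=\hat w_0+\sum_{a\in\mathrm{path}(0,e)}\hat\delta_a$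 for all $e\in\mathcal{E}$. If $\mathbb{E}[Y\mid \mathbf{X}=x,e]=\hat w_e^\top\hat\Psi(x)$ for all $x\in\mathcal{X}$ and all $e\in\mathcal{E}$, then there exists an invertible matrix $\mathbf{L}\in\mathbb{R}^{k\times k}$ such that: 1. $\Psi(x)=\mathbf{L}\hat\Psi(x)$ for all $x\in\mathcal{X}$; 2. $w_e^\top\mathbf{L}=\hat w_e^\top$ for all $e\in\mathcal{E}$; 3. $\delta_a^\top\mathbf{L}=\hat\delta_a^\top$ for all $a\in\mathcal{A}$.
   Context: Environments are the nodes of the tree; the model is $\mathbf{Z}=\Psi(\mathbf{X})+\eta$, $Y^e=w_e^\top\mathbf{Z}^e+\epsilon$, with latent dimension $k$. The learned quantities $\hat w_0,\hat\delta_a,\hat\Psi$ have the same dimension $k$ as the true ones. *)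

(* Defs.v *)
From HB Require Import structures.
From mathcomp Require Import all_boot all_order all_algebra.
From mathcomp Require Import reals.
Set Implicit Arguments. Unset Strict Implicit. Unset Printing Implicit Defensive.
Import Order.TTheory GRing.Theory Num.Theory.
Local Open Scope ring_scope.

(* A finite directed tree rooted at [r], with environments in the finType [E],
   encoded by its parent map [par]: every non-root node e has the unique
   incoming arc (par e, e); the root is fixed by [par] and every node reaches
   the root by iterating [par] (connectivity + acyclicity). *)
Definition is_rooted_tree (E : finType) (par : E -> E) (r : E) : Prop :=
  par r = r /\ forall e : E, exists n : nat, iter n par e = r.

Definition ancestors (E : finType) (par : E -> E) (e : E) : {set E} :=
  [set x | [exists i : 'I_#|E|.+1, iter i par e == x]].

Definition tree_arcs (E : finType) (par : E -> E) (r : E) : {set E * E} :=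
  [set (par x, x) | x in [set y : E | y != r]].

Definition path_arcs (E : finType) (par : E -> E) (r : E) (e : E) : {set E * E} :=
  [set (par x, x) | x in [set y in ancestors par e | y != r]].

Definition env_weight (R : realType) (k : nat) (E : finType) (par : E -> E) (r : E)
  (w0 : 'cV[R]_k) (delta : E * E -> 'cV[R]_k) (e : E) : 'cV[R]_k :=
  w0 + \sum_(a in path_arcs par r e) delta a.

Definition dotv (R : realType) (k : nat) (u v : 'cV[R]_k) : R :=
  (u^T *m v) ord0 ord0.

(* Main.v *)
Require Import Defs.
From HB Require Import structures.
From mathcomp Require Import all_boot all_order all_algebra.
From mathcomp Require Import reals classical_sets.
Import GRing.Theory.
Local Open Scope ring_scope.

Section Tree.
Variables (E : finType) (par : E -> E) (r : E).
Hypothesis htree : is_rooted_tree par r.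

Lemma iter_root n : iter n par r = r.
Proof. case: htree => h _; elim: n => //= n ->; exact h. Qed.

Lemma reach_card e : iter #|E| par e = r.
Proof.
case: htree => _ /(_ e) [n hn].
have hc : fconnect par e r by rewrite -hn; apply: fconnect_iter.
have h1 := findex_max hc.
have h2 : (order par e <= #|E|)%N.
  by rewrite -size_orbit -(card_uniqP (orbit_uniq par e)) max_card.
have -> : #|E| = ((#|E| - findex par e r) + findex par e r)%N.
  by rewrite subnK // ltnW // (leq_trans h1 h2).
by rewrite iterD iter_findex // iter_root.
Qed.

Lemma ancP e x : reflect (exists n, iter n par e = x) (x \in ancestors par e).
Proof.
rewrite inE; apply: (iffP existsP) => [[i /eqP h]|[n hn]]; first by exists i.
case: (leqP n #|E|) => hn'.
  have hn2 : (n < #|E|.+1)%N by []. by exists (Ordinal hn2); rewrite /= hn.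
exists ord_max; apply/eqP => /=; rewrite reach_card -hn.
have -> : n = ((n - #|E|) + #|E|)%N by rewrite subnK // ltnW.
by rewrite iterD reach_card iter_root.
Qed.

Lemma ancU x : ancestors par x = x |: ancestors par (par x).
Proof.
apply/setP => y; apply/ancP/setU1P.
  case=> [[|n]] /= <-; first by left.
  by right; apply/ancP; exists n; rewrite -iterSr.
case=> [->|/ancP [n <-]]; first by exists 0%N.
by exists n.+1; rewrite iterSr.
Qed.

Lemma notanc x : x != r -> x \notin ancestors par (par x).
Proof.
move=> xr; apply/negP => /ancP [n hn].
have hq q : iter (q * n.+1) par x = x.
  elim: q => [|q IH] //; by rewrite mulSn iterD IH iterSr hn.
have := hq #|E|.
have -> : (#|E| * n.+1 = (#|E| * n) + #|E|)%N by rewrite mulnS addnC.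
by rewrite iterD reach_card iter_root => h; move: xr; rewrite h eqxx.
Qed.

Lemma path_arcsU x : x != r ->
  path_arcs par r x = (par x, x) |: path_arcs par r (par x).
Proof.
move=> xr; rewrite /path_arcs -imsetU1.
have -> : [set y in ancestors par x | y != r] =
   x |: [set y in ancestors par (par x) | y != r].
  apply/setP => y; rewrite [in LHS]inE ancU !inE.
  by case: eqP => // ->; rewrite xr.
by [].
Qed.

Lemma notin_path x : x != r -> (par x, x) \notin path_arcs par r (par x).
Proof.
move=> xr; apply/imsetP => [[y]]; rewrite inE => /andP [hy _] [_ hxy].
subst y; by move: (notanc x xr); rewrite hy.
Qed.

Lemma env_weightS (R : realType) k w0 (delta : E * E -> 'cV[R]_k) x : x != r ->
  env_weight par r w0 delta x = env_weight par r w0 delta (par x) + delta (par x, x).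
Proof.
move=> xr; rewrite /env_weight path_arcsU // big_setU1 ?notin_path //.
rewrite -!addrA; congr (_ + _); exact: addrC.
Qed.
End Tree.

Lemma mxTM (R : realType) k (f g : 'I_k -> 'cV[R]_k) i j :
  ((\matrix_(i0 < k, j0 < k) f j0 i0 0)^T *m (\matrix_(i0 < k, j0 < k) g j0 i0 0)) i j
  = ((f i)^T *m g j) 0 0.
Proof. rewrite !mxE; apply: eq_bigr => l _; rewrite !mxE. done. Qed.

Lemma mxTv (R : realType) k (f : 'I_k -> 'cV[R]_k) (v : 'cV[R]_k) i :
  ((\matrix_(i0 < k, j0 < k) f j0 i0 0)^T *m v) i 0 = ((f i)^T *m v) 0 0.
Proof. rewrite !mxE; apply: eq_bigr => l _; rewrite !mxE. done. Qed.

Lemma mxuT (R : realType) k (g : 'I_k -> 'cV[R]_k) (u : 'cV[R]_k) j :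
  (u^T *m (\matrix_(i0 < k, j0 < k) g j0 i0 0)) 0 j = (u^T *m g j) 0 0.
Proof. rewrite !mxE; apply: eq_bigr => l _; rewrite !mxE. done. Qed.

Theorem proposition4p4 (R : realType) (d k : nat) (hk : (0 < k)%N)
  (E : finType) (par : E -> E) (r : E) (htree : is_rooted_tree par r)
  (Xs : set 'cV[R]_d)                  (* common support X of p(x | e) *)
  (m : E -> 'cV[R]_d -> R)             (* m e x = E[Y | X = x, e] *)
  (w0 : 'cV[R]_k) (delta : E * E -> 'cV[R]_k) (Psi : 'cV[R]_d -> 'cV[R]_k)
  (hmodel : forall e x, Xs x -> m e x = dotv (env_weight par r w0 delta e) (Psi x))
  (hw : exists es : 'I_k -> E,
      (\matrix_(i < k, j < k) env_weight par r w0 delta (es j) i 0) \in unitmx)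
  (hPsi : exists xs : 'I_k -> 'cV[R]_d, (forall j, Xs (xs j)) /\
      (\matrix_(i < k, j < k) Psi (xs j) i 0) \in unitmx)
  (w0h : 'cV[R]_k) (deltah : E * E -> 'cV[R]_k) (Psih : 'cV[R]_d -> 'cV[R]_k)
  (hfit : forall e x, Xs x -> m e x = dotv (env_weight par r w0h deltah e) (Psih x)) :
  exists L : 'M[R]_k, L \in unitmx /\
    (forall x, Xs x -> Psi x = L *m Psih x) /\
    (forall e, (env_weight par r w0 delta e)^T *m L = (env_weight par r w0h deltah e)^T) /\
    (forall a, a \in tree_arcs par r -> (delta a)^T *m L = (deltah a)^T).
Proof.
move: hw hPsi => [es hW] [xs [hxs hP]].
set w := env_weight par r w0 delta in hmodel hW *.
set wh := env_weight par r w0h deltah in hfit *.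
have F e x : Xs x -> (w e)^T *m Psi x = (wh e)^T *m Psih x.
  move=> hx; apply/matrixP => i j; rewrite !ord1.
  by have := hmodel e x hx; rewrite hfit // /dotv => ->.
set W := \matrix_(i < k, j < k) w (es j) i 0 in hW *.
set P := \matrix_(i < k, j < k) Psi (xs j) i 0 in hP *.
set Wh := \matrix_(i < k, j < k) wh (es j) i 0.
set Ph := \matrix_(i < k, j < k) Psih (xs j) i 0.
have HWP : W^T *m P = Wh^T *m Ph.
  by apply/matrixP => i j; rewrite !mxTM F.
have hWP : W^T *m P \in unitmx by rewrite unitmx_mul unitmx_tr hW hP.
move: (hWP); rewrite HWP unitmx_mul => /andP [hWh hPh].
have hWT : W^T \in unitmx by rewrite unitmx_tr.
exists (invmx W^T *m Wh^T); split; first by rewrite unitmx_mul unitmx_inv hWT.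
have HE e : (w e)^T *m (invmx W^T *m Wh^T) = (wh e)^T.
  apply: (can_inj (mulmxK hPh)) => /=.
  rewrite -!mulmxA -HWP mulKmx //.
  by apply/matrixP => i j; rewrite !ord1 !mxuT F //.
split.
  move=> x hx; rewrite -mulmxA.
  have -> : Wh^T *m Psih x = W^T *m Psi x.
    by apply/matrixP => i j; rewrite !ord1 !mxTv F.
  by rewrite mulKmx.
split; first exact: HE.
move=> a /imsetP [x]; rewrite inE => xr ->.
have hd (w1 : 'cV[R]_k) (dl : E * E -> 'cV[R]_k) :
    dl (par x, x) = env_weight par r w1 dl x - env_weight par r w1 dl (par x).
  by rewrite (@env_weightS E par r htree) // addrC addKr.
by rewrite (hd w0) (hd w0h) linearB /= mulmxBl -/w -/wh !HE linearB.
Qed.
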